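(* Let $(\mathfrak g,\mathcal F_\bullet\mathfrak g,R)$ be a filtered Rota–Baxter Lie algebra over a field of characteristic zero. For every $n\ge1$, $\mathcal F_nU(\mathfrak g)=\mathcal F_nU(\mathfrak g_R)$ as subspaces of $U(\mathfrak g)$.
   Context: Filtered Rota–Baxter Lie algebra: a Lie algebra $\mathfrak g$ with subspaces $\mathfrak g=\mathcal F_1\mathfrak g\supset\mathcal F_2\mathfrak g\supset\cdots$, $[\mathcal F_n\mathfrak g,\mathcal F_m\mathfrak g]\subset\mathcal F_{n+m}\mathfrak g$, and a linear map $R$ with $[R(x),R(y)]=R([R(x),y]+[x,R(y)]+[x,y])$ and $R(\mathcal F_n\mathfrak g)\subset\mathcal F_n\mathfrak g$. Let $\mathcal R:U(\mathfrak g)\to U(\mathfrak g)$ be the well-defined linear map with $\mathcal R(1)=1$, $\mathcal R(x)=R(x)$, $\mathcal R(xh)=R(x)\mathcal R(h)-\mathcal R([R(x),h])$ ($x\in\mathfrak g$, $h\in U(\mathfrak g)$). Define $a\star b=a_{(1)}\mathcal R(a_{(2)})\,b\,S(\mathcal R(a_{(3)}))$ on $U(\mathfrak g)$ (Sweedler notation). The descendant Lie algebra $\mathfrak g_R$ is $\mathfrak g$ with bracket $[x,y]_R=[R(x),y]+[x,R(y)]+[x,y]$; the algebra $(U(\mathfrak g),\star)$ is identified with $U(\mathfrak g_R)$ (identity on $\mathfrak g$). $\mathcal F_nU(\mathfrak g)$ ($n\ge1$) is the span of products $x_1\cdots x_k$ in $U(\mathfrak g)$ with $k\ge1$, $x_i\in\mathcal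 F_{n_i}\mathfrak g$, $\sum n_i\ge n$; $\mathcal F_nU(\mathfrak g_R)$ is the span of $x_1\star x_2\star\cdots\star x_k$ with the same conditions. *)

(* Defs.v *)
From mathcomp Require Import all_boot all_order all_algebra.
Set Implicit Arguments. Unset Strict Implicit. Unset Printing Implicit Defensive.
Import GRing.Theory.
Local Open Scope ring_scope.

Section Defs.
Variable K : fieldType.

Definition is_lie_bracket (g : lmodType K) (br : g -> g -> g) : Prop :=
  [/\ forall (a : K) x y z, br (a *: x + y) z = a *: br x z + br y z,
      forall (a : K) x y z, br x (a *: y + z) = a *: br x y + br x z,
      forall x, br x x = 0
    & forall x y z, br x (br y z) + br y (br z x) + br z (br x y) = 0].

Definition is_subspace (V : lmodType K) (P : V -> Prop) : Prop :=
  P 0 /\ forall (a : K) x y, P x -> P y -> P (a *: x + y).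

(* Filtration g = F_1 g ⊃ F_2 g ⊃ ... (only indices n >= 1 are meaningful). *)
Definition is_lie_filtration (g : lmodType K) (br : g -> g -> g)
    (F : nat -> g -> Prop) : Prop :=
  [/\ forall n, (1 <= n)%N -> is_subspace (F n),
      forall x, F 1%N x,
      forall n x, (1 <= n)%N -> F n.+1 x -> F n x
    & forall n m x y, (1 <= n)%N -> (1 <= m)%N -> F n x -> F m y ->
        F (n + m)%N (br x y)].

Definition is_rota_baxter (g : lmodType K) (br : g -> g -> g) (R : g -> g) :=
  forall x y, br (R x) (R y) = R (br (R x) y + br x (R y) + br x y).

Definition is_lie_map (g : lmodType K) (br : g -> g -> g) (A : algType K)
    (f : g -> A) : Prop :=
  forall x y, f (br x y) = f x * f y - f y * f x.

Definition is_universal_enveloping (g : lmodType K) (br : g -> g -> g)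
    (U : algType K) (i : {linear g -> U}) : Prop :=
  is_lie_map br i /\
  forall (A : algType K) (f : {linear g -> A}), is_lie_map br f ->
    exists phi : {lrmorphism U -> A},
      (forall x, phi (i x) = f x) /\
      (forall psi : {lrmorphism U -> A}, (forall x, psi (i x) = f x) ->
          forall u, psi u = phi u).

Definition in_span (V : lmodType K) (P : V -> Prop) (u : V) : Prop :=
  exists (k : nat) (c : 'I_k -> K) (v : 'I_k -> V),
    (forall j, P (v j)) /\ u = \sum_(j < k) c j *: v j.

Definition filt_gen (g : lmodType K) (F : nat -> g -> Prop) (U : lmodType K)
    (prod : seq g -> U) (n : nat) (u : U) : Prop :=
  exists s : seq (nat * g),
    [/\ s != [::],
        forall p, p \in s -> (1 <= p.1)%N /\ F p.1 p.2,
        (n <= sumn (map fst s))%N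
      & u = prod (map snd s)].

Definition Uprod (g : lmodType K) (U : algType K) (i : g -> U) (xs : seq g) : U :=
  \prod_(x <- xs) i x.

(* The star product with a = x in g: the Sweedler formula with
   Δ^2 x = x⊗1⊗1 + 1⊗x⊗1 + 1⊗1⊗x, 𝓡(1)=1, 𝓡(x)=R(x), S(R x) = - R x:
   x ⋆ b = x b + R(x) b - b R(x). *)
Definition star (g : lmodType K) (U : algType K) (i : g -> U) (R : g -> g)
    (x : g) (b : U) : U :=
  i x * b + i (R x) * b - b * i (R x).

Definition Ustar (g : lmodType K) (U : algType K) (i : g -> U) (R : g -> g)
    (xs : seq g) : U :=
  foldr (star i R) 1 xs.

Definition FU (g : lmodType K) (F : nat -> g -> Prop) (U : algType K)
    (i : g -> U) (n : nat) : U -> Prop :=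
  in_span (filt_gen F (Uprod i) n).

Definition FUR (g : lmodType K) (F : nat -> g -> Prop) (U : algType K)
    (i : g -> U) (R : g -> g) (n : nat) : U -> Prop :=
  in_span (filt_gen F (Ustar i R) n).

End Defs.

(* Main.v *)
Require Import Defs.
From mathcomp Require Import all_boot all_order all_algebra zify.
Import GRing.Theory.
Local Open Scope ring_scope.

Lemma span0 (K : fieldType) (V : lmodType K) (P : V -> Prop) : in_span P 0.
Proof. exists 0%N, (fun _ => 0), (fun _ => 0); split; first by case.
by rewrite big_ord0. Qed.

Lemma span_gen (K : fieldType) (V : lmodType K) (P : V -> Prop) u : P u -> in_span P u.
Proof. move=> Pu; exists 1%N, (fun _ => 1), (fun _ => u); split => //.
by rewrite big_ord1 scale1r. Qed.

Lemma spanZ (K : fieldType) (V : lmodType K) (P : V -> Prop) a u :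
  in_span P u -> in_span P (a *: u).
Proof. case=> k [c [v [Pv ->]]]; exists k, (fun j => a * c j), v; split => //.
by rewrite scaler_sumr; apply: eq_bigr => j _; rewrite scalerA. Qed.

Lemma spanD (K : fieldType) (V : lmodType K) (P : V -> Prop) u w :
  in_span P u -> in_span P w -> in_span P (u + w).
Proof.
case=> k1 [c1 [v1 [Pv1 ->]]]; case=> k2 [c2 [v2 [Pv2 ->]]].
exists (k1 + k2)%N, (fun j => match split j with inl a => c1 a | inr b => c2 b end),
  (fun j => match split j with inl a => v1 a | inr b => v2 b end); split.
  by move=> j; case: (split j).
rewrite big_split_ord /=; congr (_ + _); apply: eq_bigr => j _.
  by rewrite (unsplitK (inl j)).
by rewrite (unsplitK (inr j)).
Qed.

Lemma spanN (K : fieldType) (V : lmodType K) (P : V -> Prop) u :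
  in_span P u -> in_span P (- u).
Proof. by move=> h; rewrite -scaleN1r; apply: spanZ. Qed.

Lemma spanB (K : fieldType) (V : lmodType K) (P : V -> Prop) u w :
  in_span P u -> in_span P w -> in_span P (u - w).
Proof. by move=> hu hw; apply: spanD => //; apply: spanN. Qed.

Lemma span_lin (K : fieldType) (V W : lmodType K) (P : V -> Prop) (Q : W -> Prop)
  (f : V -> W) : (forall x y, f (x + y) = f x + f y) ->
  (forall a x, f (a *: x) = a *: f x) ->
  (forall x, P x -> in_span Q (f x)) -> forall u, in_span P u -> in_span Q (f u).
Proof.
move=> fD fZ fP u [k [c [v [Pv ->]]]]; elim: k c v Pv => [|k IH] c v Pv.
  have f0 : f 0 = 0 by rewrite -(scale0r 0) fZ scale0r.
  by rewrite big_ord0 f0; apply: span0.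
rewrite big_ord_recr fD fZ; apply: spanD; first by apply: IH.
by apply: spanZ; apply: fP.
Qed.

Lemma span_mono (K : fieldType) (V : lmodType K) (P Q : V -> Prop) :
  (forall x, P x -> in_span Q x) -> forall u, in_span P u -> in_span Q u.
Proof. by move=> h; apply: (@span_lin _ _ _ P Q id). Qed.
Arguments span0 {K V P}.
Arguments span_gen {K V P u}.
Arguments spanZ {K V P} a {u}.
Arguments spanD {K V P u w}.
Arguments spanN {K V P u}.
Arguments spanB {K V P u w}.
Arguments span_lin {K V W P Q f}.
Arguments span_mono {K V P Q}.

Definition good (K : fieldType) (g : lmodType K) (F : nat -> g -> Prop) (s : seq (nat * g)) :=
  forall p, p \in s -> (1 <= p.1)%N /\ F p.1 p.2.
Arguments good {K g}.

Lemma good_cons (K : fieldType) (g : lmodType K) (F : nat -> g -> Prop) p s :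
  good F (p :: s) <-> ((1 <= p.1)%N /\ F p.1 p.2) /\ good F s.
Proof.
split.
  move=> h; split; first by apply: h; rewrite in_cons eqxx.
  by move=> q qs; apply: h; rewrite in_cons qs orbT.
by case=> hp hs q; rewrite in_cons => /orP [/eqP -> //|]; apply: hs.
Qed.

Lemma filt_gen_mono (K : fieldType) (g : lmodType K) (F : nat -> g -> Prop)
  (U : lmodType K) (prod : seq g -> U) n m u :
  (m <= n)%N -> in_span (filt_gen F prod n) u -> in_span (filt_gen F prod m) u.
Proof.
move=> hmn; apply: span_mono => x [s [h1 h2 h3 h4]]; apply: span_gen.
by exists s; split => //; apply: leq_trans h3.
Qed.

Lemma star_lin (K : fieldType) (g : lmodType K) (U : algType K) (i : g -> U) (R : g -> g) x :
  (forall u v, star i R x (u + v) = star i R x u + star i R x v) /\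
  (forall a u, star i R x (a *: u) = a *: star i R x u).
Proof.
split.
  move=> u v; rewrite /star !mulrDr mulrDl.
  rewrite !opprD -!addrA; congr (_ + _); rewrite addrCA; congr (_ + _).
  by rewrite [RHS]addrCA; congr (_ + _); rewrite [RHS]addrCA.
move=> a u; rewrite /star -scalerAr -scalerAr -scalerAl.
by rewrite scalerBr scalerDr.
Qed.

Definition deg (g : Type) (s : seq (nat * g)) := sumn (map fst s).
Arguments deg {g}.

Lemma Uprod_cons (K : fieldType) (g : lmodType K) (U : algType K) (i : g -> U) x xs :
  Uprod i (x :: xs) = i x * Uprod i xs.
Proof. by rewrite /Uprod big_cons. Qed.

Lemma Uprod_rcons (K : fieldType) (g : lmodType K) (U : algType K) (i : g -> U) x xs :
  Uprod i (rcons xs x) = Uprod i xs * i x.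
Proof. by rewrite /Uprod -cats1 big_cat big_seq1. Qed.

Lemma Uprod1 (K : fieldType) (g : lmodType K) (U : algType K) (i : g -> U) x :
  Uprod i [:: x] = i x.
Proof. by rewrite /Uprod big_seq1. Qed.

Lemma lemA (K : fieldType) (g : lmodType K) (F : nat -> g -> Prop) (R : g -> g)
  (HRF : forall n x, (1 <= n)%N -> F n x -> F n (R x))
  (U : algType K) (i : g -> U) :
  forall s, s != [::] -> good F s -> FU F i (deg s) (Ustar i R (map snd s)).
Proof.
elim => [//|[m x] s IH] _ /good_cons [[/= hm hx] gs].
case: s IH gs => [|q s] IH gs.
  have -> : star i R x (Ustar i R (map snd [::])) = i x.
    by rewrite /Ustar /= /star !mulr1 mul1r addrK.
  apply: span_gen; exists [:: (m, x)]; split => //.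
    by move=> p; rewrite inE => /eqP ->.
  by rewrite Uprod1.
have [sD sZ] := @star_lin _ _ _ i R x.
apply: (span_lin sD sZ _ _ (IH isT gs)).
move=> u [t [t0 gt dt ->]].
have hRx := HRF _ _ hm hx.
rewrite /star -Uprod_cons -Uprod_cons -Uprod_rcons.
apply: spanB; first apply: spanD.
- apply: span_gen; exists ((m, x) :: t); split => //.
    by apply/good_cons.
  by rewrite /deg /= in dt *; rewrite leq_add2l.
- apply: span_gen; exists ((m, R x) :: t); split => //.
    by apply/good_cons.
  by rewrite /deg /= in dt *; rewrite leq_add2l.
- apply: span_gen; exists (rcons t (m, R x)); split => //.
  + by case: (t).
  + have h : good F ((m, R x) :: t) by apply/good_cons.
    by move=> p; rewrite mem_rcons; apply: h.
  + by rewrite map_rcons sumn_rcons; rewrite /deg /= in dt *; lia.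
  + by rewrite map_rcons.
Qed.

Lemma comm_id (K : fieldType) (U : algType K) (a b c : U) :
  a * (b * c) - b * c * a = (a * b - b * a) * c + b * (a * c - c * a).
Proof.
rewrite mulrBl mulrBr !mulrA addrA subrK //.
Qed.

Lemma lem_comm (K : fieldType) (g : lmodType K) (br : g -> g -> g) (F : nat -> g -> Prop)
  (HF : is_lie_filtration br F) (U : algType K) (i : g -> U) (Hi : is_lie_map br i)
  y m : (1 <= m)%N -> F m y -> forall s, good F s ->
  in_span (fun u => exists t, [/\ good F t, size t = size s, deg t = (deg s + m)%N
                                 & u = Uprod i (map snd t)])
    (i y * Uprod i (map snd s) - Uprod i (map snd s) * i y).
Proof.
move=> hm hy; case: HF => _ _ _ Hbr.
elim => [|[n z] s IH] /=.
  by move=> _; rewrite /Uprod big_nil mulr1 mul1r subrr; apply: span0.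
move=> /good_cons [[/= hn hz] gs].
rewrite Uprod_cons comm_id -Hi; apply: spanD.
  rewrite -Uprod_cons; apply: span_gen; exists (((m + n)%N, br y z) :: s); split => //.
  - by apply/good_cons; split => //=; split; [lia | apply: Hbr].
  - by rewrite /deg /=; lia.
apply: (span_lin (f := fun u => i z * u)) (IH gs).
- by move=> a b; rewrite mulrDr.
- by move=> a b; rewrite scalerAr.
move=> u [t [gt st dt ->]]; apply: span_gen; exists ((n, z) :: t); split => //=.
- by apply/good_cons.
- by rewrite st.
- by rewrite /deg /= in dt *; lia.
- by rewrite Uprod_cons.
Qed.

Arguments lem_comm {K g br F} HF {U i} Hi {y m} _ _ {s}.

Lemma lemB (K : fieldType) (g : lmodType K) (br : g -> g -> g) (F : nat -> g -> Prop)
  (HF : is_lie_filtration br F) (R : g -> g)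
  (HRF : forall n x, (1 <= n)%N -> F n x -> F n (R x))
  (U : algType K) (i : g -> U) (Hi : is_lie_map br i) :
  forall k s, (size s <= k)%N -> s != [::] -> good F s ->
    FUR F i R (deg s) (Uprod i (map snd s)).
Proof.
elim => [|k IH]; first by case.
case => [//|[m x] s] /= hs _ /good_cons [[/= hm hx] gs].
case: s hs gs => [|q s] hs gs.
  rewrite Uprod1; apply: span_gen; exists [:: (m, x)]; split => //.
    by move=> p; rewrite inE => /eqP ->.
  by rewrite /Ustar /= /star !mulr1 mul1r addrK.
have hRx := HRF _ _ hm hx.
rewrite Uprod_cons.
have -> : i x * Uprod i (map snd (q :: s)) =
  star i R x (Uprod i (map snd (q :: s))) -
  (i (R x) * Uprod i (map snd (q :: s)) - Uprod i (map snd (q :: s)) * i (R x)).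
  by rewrite /star -[i x * _ + _ - _]addrA addrK.
apply: spanB.
  have [sD sZ] := @star_lin _ _ _ i R x.
  have hs' : (size (q :: s) <= k)%N by [].
  apply: (span_lin sD sZ _ _ (IH _ hs' isT gs)).
  move=> u [t [t0 gt dt ->]]; apply: span_gen; exists ((m, x) :: t); split => //.
  - by apply/good_cons.
  - by rewrite /deg /= in dt *; lia.
apply: span_mono (lem_comm HF Hi hm hRx gs) => u [t [gt st dt ->]].
have -> : deg ((m, x) :: q :: s) = deg t by rewrite dt /deg /=; lia.
apply: IH => //; first by rewrite st.
by case: t st {gt dt}.
Qed.

Arguments lemB {K g br F} HF {R} HRF {U i} Hi {k s}.
Arguments lemA {K g F R} HRF {U} i {s}.
Arguments filt_gen_mono {K g F U prod n m u}.

Theorem proposition4p10 (K : fieldType) (pchar0 : [pchar K] =i pred0)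
    (g : lmodType K) (br : g -> g -> g) (F : nat -> g -> Prop)
    (R : {linear g -> g})
    (Hlie : is_lie_bracket br)
    (HF : is_lie_filtration br F)
    (HRB : is_rota_baxter br R)
    (HRF : forall n x, (1 <= n)%N -> F n x -> F n (R x))
    (U : algType K) (i : {linear g -> U})
    (HU : is_universal_enveloping br i) :
  forall n : nat, (1 <= n)%N ->
    forall u : U, FU F i n u <-> FUR F i R n u.
Proof.
move=> n _ u; case: HU => Hi _; split.
  apply: span_mono => v [s [s0 gs ds ->]].
  apply: (filt_gen_mono ds).
  exact: (lemB HF HRF Hi (leqnn _) s0 gs).
apply: span_mono => v [s [s0 gs ds ->]].
apply: (filt_gen_mono ds).
exact: (lemA HRF i s0 gs).
Qed.
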